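(* Let $X_1,\ldots,X_q\in\{-1,0,1\}$ be i.i.d. random variables with mean $\mu\ne0$. Then for every $\epsilon$ with $0<\epsilon\le\frac{\min(\Pr(X_i=1),\Pr(X_i=-1))}{2|\mu|}$, $$\Pr\left(\left|\frac1{q|\mu|}\sum_{i=1}^qX_i-\frac{\mu}{|\mu|}\right|\ge\epsilon\right)\le4e^{-\frac{q\epsilon^2|\mu|^2}{12\Pr(X_i\ne0)}}.$$ *)

(* Defs.v *)
From mathcomp Require Import all_boot all_order all_algebra.
From mathcomp Require Import all_classical all_reals.
From mathcomp Require Import sequences exp.
Set Implicit Arguments. Unset Strict Implicit. Unset Printing Implicit Defensive.
Import Order.TTheory GRing.Theory Num.Theory.
Local Open Scope ring_scope.

(* The value set {-1,0,1} is indexed by 'I_3 : index k stands for the value k - 1. *)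
Definition val3 {R : ringType} (k : 'I_3) : R := (k : nat)%:R - 1.

(* The common law of the X_i: P(X=-1) = pm, P(X=0) = p0, P(X=1) = pp. *)
Definition law3 {R : ringType} (pm p0 pp : R) (k : 'I_3) : R :=
  if (k : nat) == 0%N then pm else if (k : nat) == 1%N then p0 else pp.

Definition mean3 {R : ringType} (p : 'I_3 -> R) : R := \sum_(k < 3) p k * val3 k.

(* Probability of an event about (X_1,...,X_q) when X_1..X_q are i.i.d. with
   law p: the joint law is the product law on outcomes x : 'I_q -> {-1,0,1}. *)
Definition iid_prob {R : ringType} (q : nat) (p : 'I_3 -> R)
  (E : {ffun 'I_q -> 'I_3} -> bool) : R :=
  \sum_(x : {ffun 'I_q -> 'I_3} | E x) \prod_(i < q) p (x i).
Arguments iid_prob {R} q p E.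

(* Main.v *)
Require Import Defs.
From mathcomp Require Import all_boot all_order all_algebra.
From mathcomp Require Import all_classical all_reals.
From mathcomp Require Import sequences exp.
From mathcomp Require Import ring lra.
Import Order.TTheory GRing.Theory Num.Theory.
Local Open Scope ring_scope.


Lemma expR_quad (R : realType) (x : R) : `|x| <= 1/2 -> expR x <= 1 + x + 2 * x ^+ 2.
Proof.
move=> hx.
have hx' : -(1/2) <= x <= 1/2 by rewrite -ler_norml.
case/andP: hx' => h1 h2.
have e1 := expR_ge1Dx (- x).
rewrite expRN in e1.
have hpos : 0 < 1 - x by lra.
have ex := expR_gt0 x.
have : (1 - x) * expR x <= 1.
  have := ler_wpM2r (ltW ex) e1.
  by rewrite mulVf ?lt0r_neq0.
move=> h.
have key : 1 <= (1 - x) * (1 + x + 2 * x ^+ 2).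
  have : 0 <= x ^+ 2 * (1 - 2 * x) by apply: mulr_ge0; [exact: sqr_ge0| lra].
  move=> h3; nra.
nra.
Qed.

Lemma mean3E (R : realType) (pm p0 pp : R) : mean3 (law3 pm p0 pp) = pp - pm.
Proof.
rewrite /mean3 !big_ord_recr big_ord0 /= /law3 /val3 /=. lra.
Qed.


Lemma mgf (R : realType) (pm p0 pp a c : R) :
  0 <= pm -> 0 <= p0 -> 0 <= pp -> pm + p0 + pp = 1 -> `|a| <= 1/2 ->
  \sum_(k < 3) law3 pm p0 pp k * expR (a * (val3 k - (pp - pm)) - c)
  <= expR (2 * a ^+ 2 * (pp + pm) - c).
Proof.
move=> hm h0 hp hs ha.
have E : forall v : R, expR (a * (v - (pp - pm)) - c) = expR (a * v) * expR (- (a * (pp - pm)) - c).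
  by move=> v; rewrite -expRD; congr expR; ring.
rewrite !big_ord_recr big_ord0 /= /law3 /val3 /= !E.
set K := expR (- (a * (pp - pm)) - c).
have -> : expR (2 * a ^+ 2 * (pp + pm) - c) = expR (a * (pp - pm) + 2 * a ^+ 2 * (pp + pm)) * K.
  by rewrite /K -expRD; congr expR; ring.
have Kp : 0 < K by exact: expR_gt0.
have e1 := @expR_quad _ a ha.
have ha' : `|- a| <= 1/2 by rewrite normrN.
have e2 := @expR_quad _ (-a) ha'.
have e3 := expR_ge1Dx (a * (pp - pm) + 2 * a ^+ 2 * (pp + pm)).
have -> : a * (0 - 1) = - a by ring.
have -> : a * (1 - 1) = 0 by ring.
have -> : a * (2 - 1) = a by ring.
rewrite expR0.
have -> : 0 + pm * (expR (- a) * K) + p0 * (1 * K) + pp * (expR a * K) =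
  (pm * expR (- a) + p0 + pp * expR a) * K by ring.
rewrite ler_pM2r //.
rewrite sqrrN in e2.
have f1 := ler_wpM2l hm e2.
have f2 := ler_wpM2l hp e1.
nra.
Qed.


Lemma iid_factor (R : realType) q (p g : 'I_3 -> R) :
  \sum_(x : {ffun 'I_q -> 'I_3}) (\prod_(i < q) p (x i)) * \prod_(i < q) g (x i)
  = (\sum_(k < 3) p k * g k) ^+ q.
Proof.
have -> : (\sum_(k < 3) p k * g k) ^+ q = \prod_(i < q) (\sum_(k < 3) p k * g k).
  by rewrite prodr_const card_ord.
rewrite bigA_distr_bigA /=.
apply: eq_bigr => x _.
symmetry; exact: big_split.
Qed.

Lemma sum_lin (R : realType) q (x : {ffun 'I_q -> 'I_3}) (l m t : R) :
  \sum_(i < q) (l * (val3 (x i) - m) - l * t)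
  = l * ((\sum_(i < q) val3 (x i)) - q%:R * m) - l * (q%:R * t).
Proof.
by rewrite sumrB -mulr_sumr sumrB !sumr_const card_ord !mulr_natl mulrnAr.
Qed.


Theorem lemma7 (R : realType) (q : nat) (pm p0 pp eps : R) :
  (0 < q)%N ->
  0 <= pm -> 0 <= p0 -> 0 <= pp -> pm + p0 + pp = 1 ->
  let p := law3 pm p0 pp in
  let mu := mean3 p in
  mu != 0 ->
  0 < eps -> eps <= Num.min pp pm / (2 * `|mu|) ->
  iid_prob q p
    (fun x => eps <= `| (q%:R * `|mu|)^-1 * (\sum_(i < q) val3 (x i)) - mu / `|mu| |)
  <= 4 * expR (- (q%:R * eps ^+ 2 * `|mu| ^+ 2) / (12 * (pp + pm))).
Proof.
move=> hq hm h0 hp hs p mu hmu he heps.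
have muE : mu = pp - pm by rewrite /mu /p mean3E.
have amu : 0 < `|mu| by rewrite normr_gt0.
have mus : `|mu| <= pp + pm by rewrite muE ler_norml; apply/andP; split; lra.
set s := pp + pm in mus *.
have sp : 0 < s by apply: lt_le_trans mus.
set t := eps * `|mu|.
have tp : 0 < t by rewrite /t mulr_gt0.
have ht : t <= s / 4.
  have h1 : t <= Num.min pp pm / 2.
    move: heps; rewrite ler_pdivlMr ?mulr_gt0 // => h.
    have : t = eps * `|mu| by [].
    nra.
  have /andP[h2 h3] : (Num.min pp pm <= pp) && (Num.min pp pm <= pm) by rewrite -le_min.
  rewrite /s; lra.
have qp : (0 : R) < q%:R by rewrite ltr0n.
set l := t / (4 * s).
have lp : 0 <= l by rewrite /l divr_ge0 // ?mulr_ge0 // ltW.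
have l16 : l <= 1/16.
  rewrite /l ler_pdivrMr ?mulr_gt0 //; lra.
have la : `|l| <= 1/2 by rewrite ger0_norm //; lra.
have lna : `|-l| <= 1/2 by rewrite normrN.
set g1 := fun k => expR (l * (val3 k - mu) - l * t).
set g2 := fun k => expR (- l * (val3 k - mu) - l * t).
have pge0 : forall k, 0 <= p k by move=> k; rewrite /p /law3; case: ifP => _ //; case: ifP.
have step1 : iid_prob q p
    (fun x => eps <= `| (q%:R * `|mu|)^-1 * (\sum_(i < q) val3 (x i)) - mu / `|mu| |)
  <= \sum_(x : {ffun 'I_q -> 'I_3}) (\prod_(i < q) p (x i)) * (\prod_(i < q) g1 (x i) + \prod_(i < q) g2 (x i)).
  rewrite /iid_prob big_mkcond /=; apply: ler_sum => x _.
  have w0 : 0 <= \prod_(i < q) p (x i) by apply: prodr_ge0 => i _.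
  have P10 : 0 <= \prod_(i < q) g1 (x i) by apply: prodr_ge0 => i _; exact: expR_ge0.
  have P20 : 0 <= \prod_(i < q) g2 (x i) by apply: prodr_ge0 => i _; exact: expR_ge0.
  case: ifP => hE; last by rewrite mulr_ge0 // addr_ge0.
  rewrite -{1}(mulr1 (\prod_(i < q) p (x i))) ler_wpM2l //.
  set S := \sum_(i < q) val3 (x i) in hE.
  have qm : 0 < q%:R * `|mu| by rewrite mulr_gt0.
  have eq : (q%:R * `|mu|)^-1 * S - mu / `|mu| = (S - q%:R * mu) / (q%:R * `|mu|).
    field; apply/andP; split; exact: lt0r_neq0.
  rewrite eq normrM (@gtr0_norm _ (q%:R * `|mu|)^-1) ?invr_gt0 // in hE.
  rewrite ler_pdivlMr // in hE.
  have E1 : \prod_(i < q) g1 (x i) = expR (l * (S - q%:R * mu) - l * (q%:R * t)).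
    rewrite /S /g1 -expR_sum; congr expR.
    by rewrite sumrB -mulr_sumr sumrB !sumr_const card_ord !mulr_natl mulrnAr.
  have E2 : \prod_(i < q) g2 (x i) = expR (- l * (S - q%:R * mu) - l * (q%:R * t)).
    rewrite /S /g2 -expR_sum; congr expR.
    by rewrite sumrB -mulr_sumr sumrB !sumr_const card_ord !mulr_natl mulrnAr.
  rewrite E1 E2 in P10 P20 *.
  have qt : q%:R * t = eps * (q%:R * `|mu|) by rewrite /t; ring.
  have [hD|hD] := lerP 0 (S - q%:R * mu).
    rewrite ger0_norm // in hE.
    have := expR_ge1Dx (l * (S - q%:R * mu) - l * (q%:R * t)).
    have : 0 <= l * (S - q%:R * mu - q%:R * t) by apply: mulr_ge0 => //; lra.
    move=> h1 h2; nra.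
  rewrite ltr0_norm // in hE.
  have := expR_ge1Dx (- l * (S - q%:R * mu) - l * (q%:R * t)).
  have : 0 <= l * (- (S - q%:R * mu) - q%:R * t) by apply: mulr_ge0 => //; lra.
  move=> h1 h2; nra.
apply: (le_trans step1).
under eq_bigr => x _ do rewrite mulrDr.
rewrite big_split (iid_factor _ q p g1) (iid_factor _ q p g2).
have b1 : \sum_(k < 3) p k * g1 k <= expR (2 * l ^+ 2 * s - l * t).
  by rewrite /g1 /p /s muE; apply: mgf.
have b2 : \sum_(k < 3) p k * g2 k <= expR (2 * l ^+ 2 * s - l * t).
  by rewrite /g2 /p /s muE -(sqrrN l); apply: mgf.
have X : forall a b : R, 0 <= a -> a <= b -> a ^+ q <= b ^+ q.
  by move=> a b ha hb; apply: lerXn2r; rewrite // nnegrE (le_trans ha hb).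
have n1 : 0 <= \sum_(k < 3) p k * g1 k.
  by apply: sumr_ge0 => k _; rewrite mulr_ge0 // expR_ge0.
have n2 : 0 <= \sum_(k < 3) p k * g2 k.
  by apply: sumr_ge0 => k _; rewrite mulr_ge0 // expR_ge0.
have c1 := X _ _ n1 b1.
have c2 := X _ _ n2 b2.
rewrite -expRM_natl in c1 c2.
have key : q%:R * (2 * l ^+ 2 * s - l * t) <= - (q%:R * eps ^+ 2 * `|mu| ^+ 2) / (12 * s).
  set u := q%:R * t ^+ 2 / s.
  have up : 0 <= u by rewrite /u divr_ge0 ?mulr_ge0 ?sqr_ge0 // ltW.
  have -> : q%:R * (2 * l ^+ 2 * s - l * t) = - (u / 8).
    rewrite /u /l; field; exact: lt0r_neq0.
  have -> : - (q%:R * eps ^+ 2 * `|mu| ^+ 2) / (12 * s) = - (u / 12).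
    rewrite /u /t; field; exact: lt0r_neq0.
  lra.
rewrite -ler_expR in key.
have := expR_gt0 (- (q%:R * eps ^+ 2 * `|mu| ^+ 2) / (12 * s)).
move=> hE.
apply: le_trans (lerD c1 c2) _.
lra.
Qed.
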